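(* Let $X\in\mathcal L(V)$ be positive semidefinite with $r=\mathrm{rank}(X)$. Then for every irreducible type $\xi$, $A_\xi(X)\preceq r\,B_\xi(X)$ in the Loewner order. In particular, if $P$ is the orthogonal projector onto a $K$-dimensional subspace $\mathcal C\subseteq V$, then $A_\xi(P)\preceq K\,B_\xi(P)$.
   Context: Let $G$ be a group and $V$ a finite-dimensional complex Hilbert space with a unitary representation $\rho$ of $G$; $G$ acts on $\mathcal L(V)$ by conjugation, unitarily for $\langle X_1,X_2\rangle=\mathrm{Tr}(X_1^\dagger X_2)$. Let $\mathcal L(V)=\bigoplus_\xi\mathcal E_\xi$ be the isotypic decomposition, $m_\xi$ the multiplicity and $d_\xi$ the dimension of type $\xi$. Choose an orthogonal decomposition $\mathcal E_\xi=\bigoplus_{\alpha=1}^{m_\xi}\mathcal E_{\xi\alpha}$ into irreducibles, $G$-equivariant isometric isomorphisms $\phi^\xi_{1\alpha}:\mathcal E_{\xi1}\to\mathcal E_{\xi\alpha}$ ($\phi^\xi_{11}=\mathrm{id}$), an orthonormal basis $\{E_i^1\}_{i=1}^{d_\xi}$ of $\mathcal E_{\xi1}$, and put $E_i^\alpha=\phi^\xi_{1\alpha}(E_i^1)$. Matrix-valued enumerators: $[A_\xi(X)]_{\alpha\beta}=\sum_{i=1}^{d_\xi}\mathrm{Tr}(X^\dagger E_i^\beta)\mathrm{Tr}(X(E_i^\alpha)^\dagger)$ and $[B_\xi(X)]_{\alpha\beta}=\sum_{i=1}^{d_\xi}\mathrm{Tr}(X^\dagger(E_i^\alpha)^\dagger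 XE_i^\beta)$. For Hermitian matrices, $A\preceq B$ means $B-A$ is positive semidefinite. *)

(* Defs.v *)
From mathcomp Require Import all_boot all_order all_algebra.
From mathcomp Require Import reals complex.

Set Implicit Arguments.
Unset Strict Implicit.
Unset Printing Implicit Defensive.

Import Order.TTheory GRing.Theory Num.Theory.
Local Open Scope ring_scope.
Local Open Scope complex_scope.

Section Defs.
Variable R : realType.
Local Notation C := R[i].

Definition ctr p q (M : 'M[C]_(p, q)) : 'M[C]_(q, p) :=
  map_mx Num.conj (M^T).

Definition hs n (X1 X2 : 'M[C]_n) : C := \tr (ctr X1 *m X2).

Definition psd k (M : 'M[C]_k) : Prop :=
  ctr M = M /\ forall v : 'rV[C]_k, 0 <= (v *m M *m ctr v) 0 0.

Definition loewner_le k (A B : 'M[C]_k) : Prop := psd (B - A).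

Variable G : groupType.
Variable n : nat.
(* V = C^n with its standard inner product; L(V) = 'M[C]_n. *)
Variable rho : G -> 'M[C]_n.

Definition unitary_rep : Prop :=
  [/\ forall g h : G, rho (g * h)%g = rho g *m rho h,
      rho 1%g = 1%:M &
      forall g, rho g *m ctr (rho g) = 1%:M].

Definition conj_act (g : G) (X : 'M[C]_n) : 'M[C]_n := rho g *m X *m ctr (rho g).

Definition subspace (S : 'M[C]_n -> Prop) : Prop :=
  S 0 /\ forall (a : C) X Y, S X -> S Y -> S (a *: X + Y).

Definition invariant (S : 'M[C]_n -> Prop) : Prop :=
  forall g X, S X -> S (conj_act g X).

Definition irreducible (S : 'M[C]_n -> Prop) : Prop :=
  [/\ subspace S, invariant S, (exists X, S X /\ X <> 0) &
      forall T, subspace T -> invariant T -> (forall X, T X -> S X) ->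
        (forall X, T X -> X = 0) \/ (forall X, S X -> T X)].

Definition equiv_iso (S W : 'M[C]_n -> Prop) (psi : 'M[C]_n -> 'M[C]_n) : Prop :=
  [/\ forall (a : C) X Y, S X -> S Y -> psi (a *: X + Y) = a *: psi X + psi Y,
      forall X, S X -> W (psi X),
      forall Y, W Y -> (exists2 X, S X & psi X = Y),
      forall X Y, S X -> S Y -> psi X = psi Y -> X = Y &
      forall g X, S X -> psi (conj_act g X) = conj_act g (psi X)].

Definition isometric_on (S : 'M[C]_n -> Prop) (psi : 'M[C]_n -> 'M[C]_n) : Prop :=
  forall X Y, S X -> S Y -> hs (psi X) (psi Y) = hs X Y.

Definition isomorphic (S W : 'M[C]_n -> Prop) : Prop :=
  exists psi, equiv_iso S W psi.

(* The isotypic component of L(V) of the type of the irreducible S: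
   the subspace spanned by all irreducible subrepresentations W of L(V)
   isomorphic to S (i.e. the smallest subspace containing all of them). *)
Definition isotypic_component (S : 'M[C]_n -> Prop) (Y : 'M[C]_n) : Prop :=
  forall T, subspace T ->
    (forall W, irreducible W -> isomorphic S W -> forall X, W X -> T X) -> T Y.

(* The data fixed for one irreducible type xi, with multiplicity m.+1 and
   dimension d:  Es alpha = E_{xi,alpha} (alpha = ord0 plays the role of 1),
   phi alpha = phi^xi_{1 alpha}, e i = E_i^1. *)
Definition isotypic_data (m d : nat) (Es : 'I_m.+1 -> 'M[C]_n -> Prop)
    (phi : 'I_m.+1 -> 'M[C]_n -> 'M[C]_n) (e : 'I_d -> 'M[C]_n) : Prop :=
  [/\
      forall alpha, irreducible (Es alpha),
      forall alpha beta, alpha != beta ->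
        forall X Y, Es alpha X -> Es beta Y -> hs X Y = 0,
      (forall Y, isotypic_component (Es ord0) Y <->
        exists Ys : 'I_m.+1 -> 'M[C]_n,
          (forall alpha, Es alpha (Ys alpha)) /\ Y = \sum_alpha Ys alpha),
      (forall alpha, equiv_iso (Es ord0) (Es alpha) (phi alpha) /\
                    isometric_on (Es ord0) (phi alpha)) &
      forall X, Es ord0 X -> phi ord0 X = X] /\
      [/\ forall i, Es ord0 (e i),
          forall i j, hs (e i) (e j) = (i == j)%:R &
          forall Y, Es ord0 Y -> exists c : 'I_d -> C, Y = \sum_i c i *: e i].

Definition Ebasis m d (phi : 'I_m.+1 -> 'M[C]_n -> 'M[C]_n) (e : 'I_d -> 'M[C]_n)
    (alpha : 'I_m.+1) (i : 'I_d) : 'M[C]_n := phi alpha (e i).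

Definition Aenum m d (phi : 'I_m.+1 -> 'M[C]_n -> 'M[C]_n) (e : 'I_d -> 'M[C]_n)
    (X : 'M[C]_n) : 'M[C]_m.+1 :=
  \matrix_(alpha, beta)
    \sum_i \tr (ctr X *m Ebasis phi e beta i) * \tr (X *m ctr (Ebasis phi e alpha i)).

Definition Benum m d (phi : 'I_m.+1 -> 'M[C]_n -> 'M[C]_n) (e : 'I_d -> 'M[C]_n)
    (X : 'M[C]_n) : 'M[C]_m.+1 :=
  \matrix_(alpha, beta)
    \sum_i \tr (ctr X *m ctr (Ebasis phi e alpha i) *m X *m Ebasis phi e beta i).

End Defs.

(* Main.v *)
Require Import Defs.
From mathcomp Require Import all_boot all_order all_algebra.
From mathcomp Require Import reals complex.
From mathcomp Require Import sesquilinear spectral.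
From mathcomp Require Import ring.
Import Order.TTheory GRing.Theory Num.Theory.
Local Open Scope ring_scope.

Lemma sum_sqr_le (R0 : numDomainType) (T : finType) (S : {pred T}) (x : T -> R0) :
  (forall i, x i \is Num.real) ->
  (\sum_(i in S) x i) ^+ 2 <= #|S|%:R * \sum_(i in S) x i ^+ 2.
Proof.
move=> xr.
have key : \sum_(i in S) \sum_(j in S) (x i - x j) ^+ 2 =
   (#|S|%:R * \sum_(i in S) x i ^+ 2 - (\sum_(i in S) x i) ^+ 2) *+ 2.
  under eq_bigr => i _.
    under eq_bigr => j _ do rewrite sqrrB.
    rewrite big_split sumrB /= sumr_const sumrMnl -mulr_sumr.
    over.
  rewrite big_split sumrB /= sumr_const !sumrMnl.
  rewrite -mulr_suml; set s := \sum_(i in S) x i; set q := \sum_(i in S) x i ^+ 2.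
  ring.
have : 0 <= \sum_(i in S) \sum_(j in S) (x i - x j) ^+ 2.
  apply: sumr_ge0 => i _; apply: sumr_ge0 => j _.
  by rewrite -realEsqr rpredB.
by rewrite key pmulrn_lge0 // subr_ge0.
Qed.

Lemma diag_ineq (C : numClosedFieldType) n (d : 'I_n -> C) (g : 'I_n -> 'I_n -> C) :
  (forall k, 0 <= d k) ->
  (\sum_k d k * g k k) * (\sum_k d k * g k k)^* <=
  #|[set k | d k != 0]|%:R * \sum_k \sum_l d k * ((g l k)^* * (d l * g l k)).
Proof.
move=> d0; set S := [set k | d k != 0].
have t0 k l : 0 <= d k * ((g l k)^* * (d l * g l k)).
  have -> : d k * ((g l k)^* * (d l * g l k)) = (d k * d l) * ((g l k)^* * g l k) by ring.
  by rewrite -normCKC; apply: mulr_ge0; [apply: mulr_ge0|apply: exprn_ge0].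
have eS : \sum_k d k * g k k = \sum_(k in S) d k * g k k.
  rewrite [RHS]big_mkcond /=; apply: eq_bigr => k _; rewrite inE.
  by case: eqP => [->|]; rewrite ?mul0r.
rewrite -normCK eS.
have h1 : `|\sum_(k in S) d k * g k k| ^+ 2 <= (\sum_(k in S) `|d k * g k k|) ^+ 2.
  rewrite !expr2; apply: ler_pM => //; exact: ler_norm_sum.
apply: (le_trans h1).
apply: (le_trans (sum_sqr_le _ _ S (fun k => `|d k * g k k|) (fun i => normr_real _))).
apply: ler_wpM2l; first exact: ler0n.
apply: (@le_trans _ _ (\sum_k d k * ((g k k)^* * (d k * g k k)))).
  rewrite [X in _ <= X](bigID (fun k => k \in S)) /=.
  rewrite -[X in X <= _ ]addr0; apply: lerD; last by apply: sumr_ge0.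
  apply: ler_sum => k _; rewrite normCK rmorphM /= (geC0_conj (d0 k)).
  rewrite le_eqVlt; apply/orP; left; apply/eqP; ring.
apply: ler_sum => k _; rewrite (bigD1 k) //= lerDl; exact: sumr_ge0.
Qed.

Section Helpers.
Variable R : realType.
Local Notation C := R[i].

Lemma ctrE p q (M : 'M[C]_(p, q)) i j : ctr M i j = (M j i)^*.
Proof. by rewrite /ctr !mxE. Qed.

Lemma ctrK p q (M : 'M[C]_(p, q)) : ctr (ctr M) = M.
Proof. by apply/matrixP => i j; rewrite !ctrE conjCK. Qed.

Lemma ctrM p q r (A : 'M[C]_(p, q)) (B : 'M[C]_(q, r)) :
  ctr (A *m B) = ctr B *m ctr A.
Proof.
apply/matrixP => i j; rewrite ctrE !mxE rmorph_sum; apply: eq_bigr => k _.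
by rewrite !ctrE rmorphM mulrC.
Qed.

Lemma ctrD p q (A B : 'M[C]_(p, q)) : ctr (A + B) = ctr A + ctr B.
Proof. by apply/matrixP => i j; rewrite !ctrE !mxE rmorphD. Qed.

Lemma ctrZ p q (a : C) (A : 'M[C]_(p, q)) : ctr (a *: A) = a^* *: ctr A.
Proof. by apply/matrixP => i j; rewrite !ctrE !mxE rmorphM. Qed.

Lemma ctr_sum p q I (r : seq I) (P : pred I) (F : I -> 'M[C]_(p, q)) :
  ctr (\sum_(i <- r | P i) F i) = \sum_(i <- r | P i) ctr (F i).
Proof.
apply: (big_morph (@ctr R p q) (@ctrD p q)).
by apply/matrixP => i j; rewrite ctrE !mxE conjC0.
Qed.

Lemma tr_ctr p (A : 'M[C]_p) : \tr (ctr A) = (\tr A)^*.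
Proof.
rewrite /mxtrace rmorph_sum; apply: eq_bigr => i _; by rewrite ctrE.
Qed.


Lemma rank_ge_supp n (X : 'M[C]_n) (P : 'M[C]_n) (d : 'rV[C]_n) :
  P *m X *m ctr P = diag_mx d ->
  (#|[set k | d ord0 k != 0%R]| <= \rank X)%N.
Proof.
move=> eD; set S := [set k | d ord0 k != 0].
pose L : 'M[C]_(#|S|, n) := \matrix_(j, k) (k == enum_val j)%:R.
pose N : 'M[C]_(n, #|S|) := \matrix_(k, j) ((k == enum_val j)%:R / d ord0 k).
have LDN : L *m diag_mx d *m N = 1%:M.
  apply/matrixP => j j'; rewrite -mulmxA mul_diag_mx !mxE.
  rewrite (bigD1 (enum_val j)) //= big1 ?addr0; last first.
    by move=> k /negPf hk; rewrite !mxE hk mul0r.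
  rewrite !mxE eqxx mul1r.
  have : enum_val j \in S := enum_valP j.
  rewrite inE => dz.
  rewrite (inj_eq enum_val_inj).
  case: eqP => _; last by rewrite mul0r mulr0.
  by rewrite mul1r mulfV.
have -> : #|S| = \rank (L *m diag_mx d *m N) by rewrite LDN mxrank1.
rewrite -eD.
apply: (leq_trans (mxrankM_maxl _ _)).
apply: (leq_trans (mxrankM_maxr _ _)).
apply: (leq_trans (mxrankM_maxl _ _)).
exact: mxrankM_maxr.
Qed.


End Helpers.


Section Helpers2.
Variable R : realType.
Local Notation C := R[i].
Lemma key_core n (X F P : 'M[C]_n) (D : 'M[C]_n) :
  P *m ctr P = 1%:M -> X = ctr P *m D *m P ->
  \tr (X *m F) = \tr (D *m (P *m F *m ctr P)) /\
  \tr (X *m ctr F *m X *m F) =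
    \tr (D *m ctr (P *m F *m ctr P) *m D *m (P *m F *m ctr P)).
Proof.
move=> PQ eX; split.
  rewrite eX -!mulmxA [LHS]mxtrace_mulC -!mulmxA.
  reflexivity.
rewrite !ctrM. rewrite ctrK. rewrite eX. rewrite -!mulmxA. rewrite [LHS]mxtrace_mulC. rewrite -!mulmxA.
reflexivity.
Qed.

Lemma ord0E : (0 : 'I_1) = ord0. Proof. reflexivity. Qed.

Lemma trace_diag1 n (d : 'rV[C]_n) (G : 'M[C]_n) :
  \tr (diag_mx d *m G) = \sum_k d ord0 k * G k k.
Proof. rewrite /mxtrace; apply: eq_bigr => k _; by rewrite mul_diag_mx mxE. Qed.

Lemma trace_diag2 n (d : 'rV[C]_n) (G : 'M[C]_n) :
  \tr (diag_mx d *m ctr G *m diag_mx d *m G) =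
  \sum_k \sum_l d ord0 k * ((G l k)^* * (d ord0 l * G l k)).
Proof.
rewrite -!mulmxA /mxtrace; apply: eq_bigr => k _.
rewrite mul_diag_mx mxE mxE mulr_sumr; apply: eq_bigr => l _.
by rewrite ctrE mul_diag_mx mxE.
Qed.

Lemma ctr_delta n (k : 'I_n) : ctr (delta_mx ord0 k : 'rV[C]_n) = delta_mx k ord0.
Proof.
apply/matrixP => i j; rewrite ctrE !mxE.
by case: (i == k); case: (j == ord0); rewrite /= ?conjC0 ?conjC1.
Qed.

Lemma diag_ge0 n (X P : 'M[C]_n) (d : 'rV[C]_n) :
  (forall v : 'rV[C]_n, 0 <= (v *m X *m ctr v) 0 0) ->
  P *m X *m ctr P = diag_mx d -> forall k, 0 <= d ord0 k.
Proof.
move=> Xpos eD k; have := Xpos (delta_mx ord0 k *m P).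
rewrite ctrM ctr_delta.
have -> : (delta_mx ord0 k : 'rV[C]_n) *m P *m X *m (ctr P *m (delta_mx k ord0 : 'cV[C]_n)) =
   (delta_mx ord0 k : 'rV[C]_n) *m (P *m X *m ctr P) *m (delta_mx k ord0 : 'cV[C]_n).
  by rewrite -!mulmxA.
rewrite eD.
rewrite -rowE -colE !mxE eqxx mulr1n.
by [].
Qed.

Lemma term_ge0 (d : C) (d' : C) (g : C) : 0 <= d -> 0 <= d' -> 0 <= d * (g^* * (d' * g)).
Proof.
move=> h1 h2.
have -> : d * (g^* * (d' * g)) = (d * d') * (g^* * g) by ring.
by rewrite -normCKC; apply: mulr_ge0; [apply: mulr_ge0|apply: exprn_ge0].
Qed.

Lemma key_ineq n (X F : 'M[C]_n) : psd X ->
  \tr (X *m F) * (\tr (X *m F))^* <= (\rank X)%:R * \tr (X *m ctr F *m X *m F).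
Proof.
move=> [Xh Xpos].
have Xn : X \is normalmx.
  by apply/normalmxP; change (X *m ctr X = ctr X *m X); rewrite Xh.
have PU : spectralmx X \is unitarymx := spectral_unitarymx X.
have eX := orthomx_spectralP Xn.
rewrite invmx_unitary // in eX.
move: PU eX; set P := spectralmx X; set d := spectral_diag X => PU eX.
have PQ : P *m ctr P = 1%:M := unitarymxP PU.
change (X = ctr P *m diag_mx d *m P) in eX.
have PXQ : P *m X *m ctr P = diag_mx d.
  by rewrite eX -!mulmxA PQ mulmx1 mulmxA PQ mul1mx.
have [e1 e2] := key_core _ X F _ _ PQ eX.
rewrite e1 e2 trace_diag1 trace_diag2.
set G := P *m F *m ctr P.
have d0 := diag_ge0 _ _ _ _ Xpos PXQ.
have H := diag_ineq _ _ (fun k => d ord0 k) G d0.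
apply: (le_trans H).
apply: ler_wpM2r.
  apply: sumr_ge0 => k _; apply: sumr_ge0 => l _; exact: term_ge0.
rewrite ler_nat. exact: (rank_ge_supp _ _ _ _ _ PXQ).
Qed.
End Helpers2.


Section Main.
Variable R : realType.
Local Notation C := R[i].

Lemma tr_sum n I (r : seq I) (P : pred I) (F : I -> 'M[C]_n) :
  \tr (\sum_(i <- r | P i) F i) = \sum_(i <- r | P i) \tr (F i).
Proof. exact: (big_morph _ (@mxtraceD _ _) (mxtrace0 _ _)). Qed.

Lemma ctrB p q (A B : 'M[C]_(p, q)) : ctr (A - B) = ctr A - ctr B.
Proof. by apply/matrixP => i j; rewrite !ctrE !mxE rmorphB. Qed.

Lemma quad_form m (v : 'rV[C]_m) (M : 'M[C]_m) :
  (v *m M *m ctr v) 0 0 = \sum_a \sum_b v 0 a * M a b * (v 0 b)^*.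
Proof.
rewrite mxE exchange_big; apply: eq_bigr => b _.
by rewrite mxE big_distrl ctrE; apply: eq_bigr => a _.
Qed.

Lemma tr_bilin n (I J : finType) (L M : 'M[C]_n) (a : I -> C) (Y : I -> 'M[C]_n)
   (b : J -> C) (Z : J -> 'M[C]_n) :
  \tr (L *m (\sum_i a i *: Y i) *m M *m (\sum_j b j *: Z j)) =
  \sum_i \sum_j a i * b j * \tr (L *m Y i *m M *m Z j).
Proof.
rewrite [L *m _]mulmx_sumr mulmx_suml mulmx_suml tr_sum; apply: eq_bigr => i _.
rewrite mulmx_sumr tr_sum; apply: eq_bigr => j _.
by rewrite -!scalemxAr -!scalemxAl !mxtraceZ mulrA [b j * a i]mulrC.
Qed.

Lemma tr_lin n (I : finType) (L : 'M[C]_n) (a : I -> C) (Y : I -> 'M[C]_n) :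
  \tr (L *m (\sum_i a i *: Y i)) = \sum_i a i * \tr (L *m Y i).
Proof.
rewrite mulmx_sumr tr_sum; apply: eq_bigr => i _.
by rewrite -scalemxAr mxtraceZ.
Qed.


Definition Fv n m d (phi : 'I_m.+1 -> 'M[C]_n -> 'M[C]_n) (e : 'I_d -> 'M[C]_n)
  (v : 'rV[C]_m.+1) (i : 'I_d) : 'M[C]_n :=
  \sum_b (v 0 b)^* *: Ebasis phi e b i.
Arguments Fv {n m d}.

Lemma ctr_Fv n m d (phi : 'I_m.+1 -> 'M[C]_n -> 'M[C]_n) (e : 'I_d -> 'M[C]_n)
  (v : 'rV[C]_m.+1) i :
  ctr (Fv phi e v i) = \sum_a v 0 a *: ctr (Ebasis phi e a i).
Proof. by rewrite /Fv ctr_sum; apply: eq_bigr => a _; rewrite ctrZ conjCK. Qed.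

Lemma Bform n m d (phi : 'I_m.+1 -> 'M[C]_n -> 'M[C]_n) (e : 'I_d -> 'M[C]_n)
  (X : 'M[C]_n) (v : 'rV[C]_m.+1) :
  \sum_a \sum_b v 0 a * Benum phi e X a b * (v 0 b)^* =
  \sum_i \tr (ctr X *m ctr (Fv phi e v i) *m X *m Fv phi e v i).
Proof.
under [RHS]eq_bigr => i _ do rewrite ctr_Fv /Fv tr_bilin.
rewrite [RHS]exchange_big /=; apply: eq_bigr => a _.
rewrite [RHS]exchange_big /=; apply: eq_bigr => b _.
rewrite mxE big_distrr big_distrl /=; apply: eq_bigr => i _.
ring.
Qed.

Lemma Aform n m d (phi : 'I_m.+1 -> 'M[C]_n -> 'M[C]_n) (e : 'I_d -> 'M[C]_n)
  (X : 'M[C]_n) (v : 'rV[C]_m.+1) :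
  \sum_a \sum_b v 0 a * Aenum phi e X a b * (v 0 b)^* =
  \sum_i \tr (ctr X *m Fv phi e v i) * \tr (X *m ctr (Fv phi e v i)).
Proof.
under [RHS]eq_bigr => i _ do rewrite ctr_Fv /Fv !tr_lin big_distrl /=.
under [RHS]eq_bigr => i _ do under eq_bigr => b _ do rewrite big_distrr /=.
rewrite exchange_big [RHS]exchange_big /=; apply: eq_bigr => b _.
rewrite [RHS]exchange_big /=; apply: eq_bigr => a _.
rewrite mxE big_distrr big_distrl /=; apply: eq_bigr => i _.
ring.
Qed.

Lemma Aherm n m d (phi : 'I_m.+1 -> 'M[C]_n -> 'M[C]_n) (e : 'I_d -> 'M[C]_n)
  (X : 'M[C]_n) : ctr (Aenum phi e X) = Aenum phi e X.
Proof.
apply/matrixP => a b; rewrite ctrE !mxE rmorph_sum; apply: eq_bigr => i _.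
rewrite rmorphM /= -!tr_ctr !ctrM !ctrK mulrC; congr (_ * _); exact: mxtrace_mulC.
Qed.

Lemma Bherm n m d (phi : 'I_m.+1 -> 'M[C]_n -> 'M[C]_n) (e : 'I_d -> 'M[C]_n)
  (X : 'M[C]_n) : ctr X = X -> ctr (Benum phi e X) = Benum phi e X.
Proof.
move=> Xh; apply/matrixP => a b; rewrite ctrE !mxE rmorph_sum; apply: eq_bigr => i _.
rewrite /= -tr_ctr !ctrM !ctrK Xh -!mulmxA [RHS]mxtrace_mulC -!mulmxA.
reflexivity.
Qed.

Lemma main_psd n m d (phi : 'I_m.+1 -> 'M[C]_n -> 'M[C]_n) (e : 'I_d -> 'M[C]_n)
  (X : 'M[C]_n) : psd X ->
  loewner_le (Aenum phi e X) ((\rank X)%:R *: Benum phi e X).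
Proof.
move=> Xp; have [Xh _] := Xp; split.
  by rewrite ctrB ctrZ conjC_nat Bherm // Aherm.
move=> v; rewrite quad_form.
have -> : \sum_a \sum_b v 0 a * ((\rank X)%:R *: Benum phi e X - Aenum phi e X) a b * (v 0 b)^* =
  (\rank X)%:R * (\sum_a \sum_b v 0 a * Benum phi e X a b * (v 0 b)^*) -
  \sum_a \sum_b v 0 a * Aenum phi e X a b * (v 0 b)^*.
  rewrite mulr_sumr -sumrB; apply: eq_bigr => a _.
  rewrite mulr_sumr -sumrB; apply: eq_bigr => b _.
  rewrite !mxE; ring.
rewrite Bform Aform mulr_sumr -sumrB; apply: sumr_ge0 => i _.
rewrite subr_ge0 Xh.
have -> : \tr (X *m ctr (Fv phi e v i)) = (\tr (X *m Fv phi e v i))^*.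
  by rewrite -tr_ctr ctrM Xh mxtrace_mulC.
exact: key_ineq.
Qed.
End Main.

Lemma proj_psd (R : realType) n (P : 'M[R[i]]_n) : P *m P = P -> ctr P = P -> psd P.
Proof.
move=> PP Ph; split => // v.
have -> : v *m P *m ctr v = (v *m P) *m ctr (v *m P).
  by rewrite ctrM Ph mulmxA -[v *m P *m P]mulmxA PP.
rewrite mxE; apply: sumr_ge0 => j _; rewrite ctrE -normCK; exact: exprn_ge0.
Qed.

Local Open Scope complex_scope.

Theorem mainTheorem18 (R : realType) (G : groupType) (n : nat)
    (rho : G -> 'M[R[i]]_n) (m d : nat)
    (Es : 'I_m.+1 -> 'M[R[i]]_n -> Prop)
    (phi : 'I_m.+1 -> 'M[R[i]]_n -> 'M[R[i]]_n)
    (e : 'I_d -> 'M[R[i]]_n) :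
  unitary_rep rho ->
  isotypic_data rho Es phi e ->
  (forall X : 'M[R[i]]_n, psd X ->
     loewner_le (Aenum phi e X) ((\rank X)%:R *: Benum phi e X)) /\
  (forall (K : nat) (P : 'M[R[i]]_n),
     P *m P = P -> ctr P = P -> \rank P = K ->
     loewner_le (Aenum phi e P) (K%:R *: Benum phi e P)).
Proof.
move=> _ _; split.
  by move=> X Xp; apply: main_psd.
move=> K P PP Ph <-; apply: main_psd; exact: proj_psd.
Qed.
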